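(* Let $\mathcal X=\{\vec x^{(1)},\dots,\vec x^{(M)}\}\subset\mathbb{R}^d$, and let $\vec u\subseteq[d]$. For each $\vec v\subseteq\vec u$ let $\mathcal I_{\vec v}$ be a finite family of frequency vectors $\vec\omega\in\mathbb{R}^d$ with $\vec\omega_{\vec v^c}=\vec 0$ (with $\mathcal I_\varnothing=\{\vec 0\}$), let $\vec A_{\vec v}=\left(\mathrm{e}^{\mathrm{i}\langle\vec\omega_{\vec v},\vec x_{\vec v}\rangle}\right)_{\vec x\in\mathcal X,\vec\omega\in\mathcal I_{\vec v}}\in\mathbb{C}^{M\times|\mathcal I_{\vec v}|}$, let $\vec a_{\vec v}\in\mathbb{C}^{|\mathcal I_{\vec v}|}$, and let $f_{\vec v}$ denote the function on $\mathcal X$ given by the vector $\vec A_{\vec v}\vec a_{\vec v}$, i.e. $f_{\vec v}(\vec x_{\vec v})=\sum_{\vec\omega\in\mathcal I_{\vec v}}(\vec a_{\vec v})_{\vec\omega}\mathrm{e}^{\mathrm{i}\langle\vec\omega_{\vec v},\vec x_{\vec v}\rangle}$. Define $$\hat{\vec W}_{\vec u}=\frac{1}{M^2}\vec A_{\vec u}^*\Big(\sum_{\vec v\subsetneq\vec u}\vec A_{\vec v}\vec A_{\vec v}^*\Big)\vec A_{\vec u}.$$ Then $$\vec a_{\vec u}^*\hat{\vec W}_{\vec u}\vec a_{\vec u}\ge\sum_{\vec v\subsetneq\vec u,\ \vec a_{\vec v}\neq\vec 0}\frac{1}{\|\vec a_{\vec v}\|_2^2}\,\big|\langle f_{\vec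 u},f_{\vec v}\rangle_{\mathcal X}\big|^2,$$ where $\langle g,h\rangle_{\mathcal X}=\frac1M\sum_{\vec x\in\mathcal X}g(\vec x)\overline{h(\vec x)}$.
   Context: $[d]=\{1,\dots,d\}$, $\vec x_{\vec v}=(x_i)_{i\in\vec v}$, $\vec v^c=[d]\setminus\vec v$; the sum over $\vec v\subsetneq\vec u$ includes $\vec v=\varnothing$. $\vec A^*$ denotes the conjugate transpose. *)

(* Defs.v *)
From mathcomp Require Import all_boot all_order all_algebra.
From mathcomp Require Import complex.
From mathcomp Require Import reals trigo.
Set Implicit Arguments. Unset Strict Implicit. Unset Printing Implicit Defensive.
Import GRing.Theory Num.Theory.
Local Open Scope ring_scope.
Local Open Scope complex_scope.

Definition expi (R : realType) (t : R) : R[i] := cos t +i* sin t.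

Definition adjmx (C : numClosedFieldType) (m n : nat) (A : 'M[C]_(m, n)) : 'M[C]_(n, m) :=
  (map_mx Num.conj A)^T.

Definition dotv (R : realType) (d : nat) (v : {set 'I_d}) (w x : 'rV[R]_d) : R :=
  \sum_(j in v) w 0 j * x 0 j.

Definition Amat (R : realType) (d M : nat) (X : 'I_M -> 'rV[R]_d)
  (v : {set 'I_d}) (n : nat) (om : 'I_n -> 'rV[R]_d) : 'M[R[i]]_(M, n) :=
  \matrix_(i < M, k < n) expi (dotv v (om k) (X i)).

(* <g, h>_X = 1/M sum_{x in X} g(x) conj(h(x)), functions on X as vectors in C^M *)
Definition innerX (C : numClosedFieldType) (M : nat) (g h : 'cV[C]_M) : C :=
  (M%:R)^-1 * \sum_(i < M) g i 0 * (h i 0)^*.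

Definition sqnorm2 (C : numClosedFieldType) (n : nat) (a : 'cV[C]_n) : C :=
  \sum_(k < n) `|a k 0| ^+ 2.

(* Main.v *)
Require Import Defs.
From mathcomp Require Import all_boot all_order all_algebra.
From mathcomp Require Import complex ring.
From mathcomp Require Import reals trigo.
Import Order.TTheory GRing.Theory Num.Theory.
Local Open Scope ring_scope.
Local Open Scope complex_scope.

Lemma cs_real (C : numDomainType) n (p q : 'I_n -> C) :
  (forall i, 0 <= p i) -> (forall i, 0 <= q i) ->
  (\sum_i p i * q i) ^+ 2 <= (\sum_i p i ^+ 2) * (\sum_i q i ^+ 2).
Proof.
move=> p0 q0.
have E : \sum_i \sum_j (p i * q j - p j * q i) ^+ 2 =
   ((\sum_i p i ^+ 2) * (\sum_i q i ^+ 2) - (\sum_i p i * q i) ^+ 2) *+ 2.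
  have E1 : forall i j, (p i * q j - p j * q i) ^+ 2 =
     (p i ^+ 2 * q j ^+ 2 + p j ^+ 2 * q i ^+ 2) - (p i * q i) * (p j * q j) *+ 2.
    by move=> i j; ring.
  under eq_bigr do under eq_bigr do rewrite E1.
  under eq_bigr do rewrite sumrB big_split /=.
  rewrite sumrB big_split /=.
  rewrite [X in _ + X - _]exchange_big /=.
  rewrite mulrnBl mulr2n; congr (_ + _ - _).
  - by rewrite mulr_suml; apply: eq_bigr => i _; rewrite mulr_sumr.
  - by rewrite mulr_suml; apply: eq_bigr => i _; rewrite mulr_sumr.
  - rewrite expr2 mulr_suml -sumrMnl; apply: eq_bigr => i _.
    by rewrite mulr_sumr -sumrMnl; apply: eq_bigr => j _; rewrite mulrA.
have H : 0 <= \sum_i \sum_j (p i * q j - p j * q i) ^+ 2.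
  apply: sumr_ge0 => i _; apply: sumr_ge0 => j _.
  by rewrite -realEsqr rpredB // rpredM // ger0_real.
rewrite -subr_ge0 -(pmulrn_lge0 _ (isT : (0 < 2)%N)) -E //.
Qed.

Lemma cs_cplx (C : numClosedFieldType) n (x y : 'I_n -> C) :
  `|\sum_k (x k)^* * y k| ^+ 2 <= (\sum_k `|x k| ^+ 2) * (\sum_k `|y k| ^+ 2).
Proof.
apply: (le_trans _ (@cs_real C n (fun k => `|x k|) (fun k => `|y k|) _ _)) => //=.
rewrite ler_pXn2r // ?nnegrE ?sumr_ge0 //; last by move=> i _; rewrite mulr_ge0.
apply: le_trans (ler_norm_sum _ _ _) _.
by apply: ler_sum => k _; rewrite normrM norm_conjC.
Qed.

Theorem lemma4p5 (R : realType) (d M : nat) (X : 'I_M -> 'rV[R]_d)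
  (u : {set 'I_d}) (n : {set 'I_d} -> nat)
  (om : forall v : {set 'I_d}, 'I_(n v) -> 'rV[R]_d)
  (a : forall v : {set 'I_d}, 'cV[R[i]]_(n v)) :
  (forall v : {set 'I_d}, v \subset u ->
     forall (k : 'I_(n v)) (j : 'I_d), j \notin v -> om v k 0 j = 0) ->
  n set0 = 1%N ->
  (forall k : 'I_(n set0), om set0 k = 0) ->
  let A := fun v : {set 'I_d} => Amat X v (om v) in
  let f := fun v : {set 'I_d} => A v *m a v in
  let W := ((M%:R : R[i]) ^+ 2)^-1 *:
      (adjmx (A u) *m (\sum_(v : {set 'I_d} | v \proper u) A v *m adjmx (A v)) *m A u) in
  \sum_(v : {set 'I_d} | (v \proper u) && (a v != 0))
      `|innerX (f u) (f v)| ^+ 2 / sqnorm2 (a v)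
    <= (adjmx (a u) *m W *m a u) 0 0.
Proof.
Proof.
move=> _ _ _; cbv zeta.
set A := (fun v : {set 'I_d} => Amat X v (om v)).
set f := (fun v : {set 'I_d} => A v *m a v).
set W := (_ *: _).
pose g v := adjmx (A v) *m f u.
have adjmxM : forall m n p (B : 'M[R[i]]_(m, n)) (D : 'M[R[i]]_(n, p)),
    adjmx (B *m D) = adjmx D *m adjmx B.
  by move=> m0 n0 p0 B D; rewrite /adjmx map_mxM trmx_mul.
have adjmxK : forall m n (B : 'M[R[i]]_(m, n)), adjmx (adjmx B) = B.
  by move=> m0 n0 B; apply/matrixP => i j; rewrite /adjmx !mxE conjCK.
have Hin : forall v, innerX (f u) (f v) =
    (M%:R)^-1 * \sum_k ((a v) k 0)^* * (g v) k 0.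
  move=> v; rewrite /innerX; congr (_ * _).
  have -> : \sum_k (a v k 0)^* * g v k 0 = (adjmx (f v) *m f u) 0 0.
    rewrite /f adjmxM -mulmxA mxE; apply: eq_bigr => k _.
    by rewrite /adjmx !mxE.
  by rewrite mxE; apply: eq_bigr => i _; rewrite /adjmx !mxE mulrC.
have Hrhs : (adjmx (a u) *m W *m a u) 0 0 =
    ((M%:R : R[i]) ^+ 2)^-1 * \sum_(v : {set 'I_d} | v \proper u) \sum_k `|g v k 0| ^+ 2.
  rewrite /W -scalemxAr -scalemxAl mxE; congr (_ * _).
  set S := (\sum_(v : {set 'I_d} | v \proper u) A v *m adjmx (A v)).
  have -> : adjmx (a u) *m (adjmx (A u) *m S *m A u) *m a u = adjmx (f u) *m S *m f u.
    by rewrite /f adjmxM !mulmxA.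
  rewrite /S mulmx_sumr mulmx_suml summxE.
  apply: eq_bigr => v _.
  have -> : adjmx (f u) *m (A v *m adjmx (A v)) *m f u = adjmx (g v) *m g v.
    by rewrite /g [adjmx (adjmx _ *m _)]adjmxM adjmxK !mulmxA.
  by rewrite mxE; apply: eq_bigr => k _; rewrite /adjmx !mxE normCKC.
rewrite Hrhs big_mkcondr mulr_sumr; apply: ler_sum => v _.
case: ifP => [av0|_]; last first.
  by apply: mulr_ge0; [rewrite invr_ge0 exprn_ge0 // ler0n | apply: sumr_ge0 => k _; rewrite exprn_ge0].
have N0 : 0 < sqnorm2 (a v).
  rewrite lt_def; apply/andP; split; last first.
    by apply: sumr_ge0 => k _; rewrite exprn_ge0.
  apply/negP; rewrite /sqnorm2 => /eqP H0.
  have H := psumr_eq0P (fun k _ => exprn_ge0 2 (normr_ge0 (a v k 0))) H0.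
  move/negP: av0; apply; apply/eqP/matrixP => k j; rewrite (ord1 j) mxE.
  by apply/eqP; rewrite -normr_eq0 -(@sqrf_eq0 _ `|_|) H.
rewrite Hin normrM exprMn normfV normr_nat -exprVn -mulrA.
rewrite ler_wpM2l ?exprn_ge0 ?invr_ge0 ?ler0n //.
rewrite ler_pdivrMr // mulrC; apply: cs_cplx.
Qed.
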